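(* There exist dimensions $D_1,D_2\ge1$, data points, a bandwidth $\sigma>0$, a query index $i$, candidate sets $S_1(i),S_2(i)$ and $S(i)=S_1(i)\cup S_2(i)$, and indices $j\ne k$ in $S(i)$ with the following properties: - $k\notin\mathcal{N}_1(i)$ and $k\notin\mathcal{N}_2(i)$; - $j$ eliminates $k$ in channel 1 but not in channel 2, i.e., $K^{(1)}_{ik}<K^{(1)}_{ij}K^{(1)}_{jk}$ and $K^{(2)}_{ik}>K^{(2)}_{ij}K^{(2)}_{jk}$; - nevertheless, $k\in\mathcal{N}(i)$. In other words, a point that is not an NNK neighbor of $x_i$ in any channel, but is not eliminated by the same point in all channels, can be an NNK neighbor in the aggregate space.
   Context: Data and channels: $x_1,\dots,x_N\in\mathbb{R}^{D}$, each written as $x_a=\begin{bmatrix}x_a^{(1)}\\ x_a^{(2)}\end{bmatrix}$ with $x_a^{(1)}\in\mathbb{R}^{D_1}$, $x_a^{(2)}\in\mathbb{R}^{D_2}$, $D_1+D_2=D$. Kernel values: - Channel kernel: for $c=1,2$, $K^{(c)}_{ab}=\exp\!\big(-\|x_a^{(c)}-x_b^{(c)}\|^2/(2\sigma^2)\big)$. - Aggregate kernel: $K_{ab}=\exp\!\big(-\|x_a-x_b\|^2/(2\sigma^2)\big)=K^{(1)}_{ab}K^{(2)}_{ab}$. $K$-nearest-neighbor candidate set: for channel $c$, $S_c(i)\subseteq\{1,\dots,N\}\setminus\{i\}$ with $|S_c(i)|=K$ and $\|x_i^{(c)}-x_l^{(c)}\|\le\|x_i^{(c)}-x_m^{(c)}\|$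 for all $l\in S_c(i)$ and all $m\notin S_c(i)\cup\{i\}$. NNK neighborhood: given a query $i$, a candidate set $S$ and kernel values $(K_{ab})$, it is $$\{\,j\in S:\ K_{ij}>K_{ik}K_{jk}\ \text{for every }k\in S\setminus\{j\}\,\}.$$ A candidate $k$ is eliminated by $j$ when $K_{ik}<K_{ij}K_{jk}$. This is the kernel-ratio-interval criterion, equivalent to $\theta_k=0$ in the two-candidate non-negative kernel regression problem over $\{j,k\}$. Notation: - $\mathcal{N}_c(i)$ is the NNK neighborhood computed with $S_c(i)$ and $K^{(c)}$. - $\mathcal{N}(i)$ is the NNK neighborhood computed with $S(i)$ and $K$. *)

(* Defs.v *)
From HB Require Import structures.
From mathcomp Require Import all_boot all_order all_algebra.
From mathcomp Require Import Rstruct.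
From Stdlib Require Import Rdefinitions Rtrigo_def.
Set Implicit Arguments. Unset Strict Implicit. Unset Printing Implicit Defensive.
Import Order.TTheory GRing.Theory Num.Theory.
Local Open Scope ring_scope.

Notation R := Rdefinitions.R.

Definition sqdist (n : nat) (u v : 'rV[R]_n) : R :=
  \sum_(d < n) (u 0 d - v 0 d) ^+ 2.

Definition edist (n : nat) (u v : 'rV[R]_n) : R := Num.sqrt (sqdist u v).

Definition gker (sigma : R) (n : nat) (u v : 'rV[R]_n) : R :=
  exp (- (sqdist u v) / (2 * sigma ^+ 2)).

Definition chan1 (D1 D2 : nat) (x : 'rV[R]_(D1 + D2)) : 'rV[R]_D1 := lsubmx x.
Definition chan2 (D1 D2 : nat) (x : 'rV[R]_(D1 + D2)) : 'rV[R]_D2 := rsubmx x.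

Definition is_knn (N : nat) (dist : 'I_N -> 'I_N -> R) (i : 'I_N) (K : nat)
    (S : {set 'I_N}) : Prop :=
  [/\ i \notin S, #|S| = K &
      forall l m, l \in S -> m \notin S -> m != i -> dist i l <= dist i m].

Definition nnk (N : nat) (Kv : 'I_N -> 'I_N -> R) (i : 'I_N) (S : {set 'I_N})
    : {set 'I_N} :=
  [set j in S | [forall k in S, (k != j) ==> (Kv i k * Kv j k < Kv i j)]].

(* Main.v *)
Require Import Defs.
From HB Require Import structures.
From mathcomp Require Import all_boot all_order all_algebra.
From mathcomp Require Import Rstruct.
From Stdlib Require Import Rdefinitions Rtrigo_def Exp_prop Rpower.
From mathcomp Require Import ring lra.
Import Order.TTheory GRing.Theory Num.Theory.
Local Open Scope ring_scope.

Definition c1 (a : 'I_4) : R :=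
  match val a with 0%N => 0%:R | 1%N => 1%:R | 2%N => 2%:R | _ => 10%:R end.
Definition c2 (a : 'I_4) : R :=
  match val a with 0%N => 0%:R | 1%N => - 1%:R | 2%N => 1%:R | _ => 0%:R end.
Definition pt (a : 'I_4) : 'rV[R]_(1 + 1) :=
  row_mx (\row_(d < 1) c1 a) (\row_(d < 1) c2 a).

Lemma ch1 a : chan1 (pt a) = \row_(d < 1) c1 a.
Proof. by rewrite /chan1 /pt row_mxKl. Qed.
Lemma ch2 a : chan2 (pt a) = \row_(d < 1) c2 a.
Proof. by rewrite /chan2 /pt row_mxKr. Qed.

Lemma sq1 (p q : R) : sqdist (\row_(d < 1) p) (\row_(d < 1) q) = (p - q) ^+ 2.
Proof. by rewrite /sqdist big_ord1 !mxE. Qed.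

Lemma sqpt a b : sqdist (pt a) (pt b) = (c1 a - c1 b) ^+ 2 + (c2 a - c2 b) ^+ 2.
Proof.
rewrite /sqdist big_split_ord /= !big_ord1 /pt.
by rewrite !row_mxEl !row_mxEr !mxE.
Qed.

Lemma gk1 n (u v : 'rV[R]_n) : gker 1 u v = exp (- sqdist u v / 2%:R).
Proof. rewrite /gker; congr exp; congr (_ / _); rewrite expr1n IZRposE INRE; exact: mulr1. Qed.

Lemma expM a b : exp a * exp b = exp (a + b).
Proof. by rewrite expRD. Qed.

Lemma explt a b : (exp a < exp b) = (a < b).
Proof.
apply/idP/idP => /RltP H; apply/RltP.
  exact: exp_lt_inv. exact: exp_increasing.
Qed.

Lemma exple a b : (exp a <= exp b) = (a <= b).
Proof. by rewrite !leNgt explt. Qed.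

Definition o0 : 'I_4 := @Ordinal 4 0 isT.
Definition o1 : 'I_4 := @Ordinal 4 1 isT.
Definition o2 : 'I_4 := @Ordinal 4 2 isT.
Definition o3 : 'I_4 := @Ordinal 4 3 isT.

Lemma cE : ((c1 o0 = 0) * (c1 o1 = 1) * (c1 o2 = 2%:R) * (c1 o3 = 10%:R) *
  (c2 o0 = 0) * (c2 o1 = -1) * (c2 o2 = 1) * (c2 o3 = 0))%type.
Proof. by []. Qed.

Lemma ord4 (m : 'I_4) : [\/ m = o0, m = o1, m = o2 | m = o3].
Proof.
case: m => m Hm.
do 4 (case: m Hm => [|m] Hm; first by
  [ apply: Or41; apply/val_inj | apply: Or42; apply/val_inj
  | apply: Or43; apply/val_inj | apply: Or44; apply/val_inj ]).
by [].
Qed.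

Theorem lemma1 :
  exists (D1 D2 N : nat) (x : 'I_N -> 'rV[R]_(D1 + D2)) (sigma : R)
         (i : 'I_N) (Kn : nat) (S1 S2 : {set 'I_N}) (j k : 'I_N),
    let K1 := fun a b => gker sigma (chan1 (x a)) (chan1 (x b)) in
    let K2 := fun a b => gker sigma (chan2 (x a)) (chan2 (x b)) in
    let K := fun a b => gker sigma (x a) (x b) in
    let S := S1 :|: S2 in
    (1 <= D1)%nat /\ (1 <= D2)%nat /\ 0 < sigma /\
    is_knn (fun a b => edist (chan1 (x a)) (chan1 (x b))) i Kn S1 /\
    is_knn (fun a b => edist (chan2 (x a)) (chan2 (x b))) i Kn S2 /\
    j \in S /\ k \in S /\ j != k /\
    k \notin nnk K1 i S1 /\ k \notin nnk K2 i S2 /\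
    K1 i k < K1 i j * K1 j k /\ K2 i j * K2 j k < K2 i k /\
    k \in nnk K i S.
Proof.
exists 1%N, 1%N, 4%N, pt, 1, o0, 2%N, [set o1; o2], [set o1; o3], o1, o2.
move=> K1 K2 K S.
rewrite /K1 /K2 /K /S /edist.
split; first by [].
split; first by [].
split; first (rewrite ?RealsE ?expr2; nra).
split.
  split; first by rewrite !inE.
    by rewrite cards2.
  move=> l m; rewrite !inE => Hl Hm Hmi.
  have -> : m = o3.
    by move: Hm Hmi; case: (ord4 m) => ->.
  rewrite !ch1 !sq1 !cE.
  rewrite ler_sqrt; last by rewrite sqr_ge0.
  by case/orP: Hl => /eqP ->; rewrite !cE; (rewrite ?RealsE ?expr2; nra).
split.
  split; first by rewrite !inE.
    by rewrite cards2.
  move=> l m; rewrite !inE => Hl Hm Hmi.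
  have -> : m = o2.
    by move: Hm Hmi; case: (ord4 m) => ->.
  rewrite !ch2 !sq1 !cE.
  rewrite ler_sqrt; last by rewrite sqr_ge0.
  by case/orP: Hl => /eqP ->; rewrite !cE; (rewrite ?RealsE ?expr2; nra).
split; first by rewrite !inE.
split; first by rewrite !inE.
split; first by [].
split.
  rewrite inE negb_and; apply/orP; right; rewrite negb_forall; apply/existsP.
  exists o1; rewrite !inE /= -leNgt.
  rewrite !gk1 !ch1 !sq1 !cE expM exple; (rewrite ?RealsE ?expr2; nra).
split.
  by rewrite inE !inE.
split.
  rewrite !gk1 !ch1 !sq1 !cE expM explt; (rewrite ?RealsE ?expr2; nra).
split.
  rewrite !gk1 !ch2 !sq1 !cE expM explt; (rewrite ?RealsE ?expr2; nra).
rewrite inE !inE /=; apply/forallP => m; apply/implyP => Hm; apply/implyP => Hmk.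
rewrite !gk1 !sqpt expM explt.
move: Hm Hmk; rewrite !inE.
by case: (ord4 m) => -> // _ _; rewrite !cE; (rewrite ?RealsE ?expr2; nra).
Qed.
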